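(* Let $\eta \in [0,1]$ and let $\Phi_{\eta}:\mathcal{L}(\mathbb{C}^2)\to\mathcal{L}(\mathbb{C}^2)$ be the qubit depolarizing channel $\Phi_{\eta}(\rho) = (1-\eta)\rho + \eta\,\frac{\mathbb{1}}{2}$. If $\eta > 0$, then every channel $\Psi$ complementary to $\Phi_{\eta}$ has positive coherent information, i.e. $\operatorname{I}_{\mathrm{C}}(\Psi) > 0$.
   Context: A quantum channel $\Phi:\mathcal{L}(\mathcal{A})\to\mathcal{L}(\mathcal{B})$ (completely positive, trace-preserving, finite-dimensional spaces) can be written as $\Phi(\rho)=\operatorname{Tr}_{\mathcal{E}}(A\rho A^{\ast})$ for an isometry $A\in\mathcal{L}(\mathcal{A},\mathcal{B}\otimes\mathcal{E})$ (a Stinespring representation). For any such representation, the channel $\Psi:\mathcal{L}(\mathcal{A})\to\mathcal{L}(\mathcal{E})$ given by $\Psi(\rho)=\operatorname{Tr}_{\mathcal{B}}(A\rho A^{\ast})$ is called a complementary channel to $\Phi$. For a channel $\Psi$ with complementary channel $\Phi$ (each is complementary to the other via the same isometry), the coherent information of a state $\rho$ through $\Psi$ is $\operatorname{I}_{\mathrm{C}}(\rho;\Psi)=\operatorname{H}(\Psi(\rho))-\operatorname{H}(\Phi(\rho))$, where $\operatorname{H}(\sigma)=-\operatorname{Tr}(\sigma\log\sigma)$ is the von Neumann entropy; this does not depend on the choice of complementary channel. The coherent information of $\Psi$ is $\operatorname{I}_{\mathrm{C}}(\Psi)=\max_{\rho}\operatorname{I}_{\mathrm{C}}(\rho;\Psi)$,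 maximized over density operators $\rho$ on the input space. *)

(* Defs.v *)
From HB Require Import structures.
From mathcomp Require Import all_boot all_order all_algebra.
From mathcomp Require Import classical_sets reals ereal exp.
From mathcomp.real_closed Require Import complex.
Set Implicit Arguments. Unset Strict Implicit. Unset Printing Implicit Defensive.
Import Order.TTheory GRing.Theory Num.Theory.
Local Open Scope ring_scope.
Local Open Scope complex_scope.

Section QDefs.
Variable R : realType.
Local Notation C := R[i].

Definition adjmx m n (A : 'M[C]_(m, n)) : 'M[C]_(n, m) := (map_mx Num.conj A)^T.

Definition density n (rho : 'M[C]_n) : Prop :=
  [/\ adjmx rho = rho,
      (forall x : 'cV[C]_n, 0 <= (adjmx x *m rho *m x) 0 0)
    & \tr rho = 1].

Definition is_isometry m n (A : 'M[C]_(m, n)) : Prop := adjmx A *m A = 1%:M.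

(* partial traces on L(C^b (x) C^e), index of |i>|k> is mxvec_index i k *)
Definition ptrace2 b e (X : 'M[C]_(b * e)) : 'M[C]_b :=
  \matrix_(i, j) \sum_(k < e) X (mxvec_index i k) (mxvec_index j k).
Definition ptrace1 b e (X : 'M[C]_(b * e)) : 'M[C]_e :=
  \matrix_(k, l) \sum_(i < b) X (mxvec_index i k) (mxvec_index i l).

(* eigenvalues (with algebraic multiplicity): the roots of the characteristic
   polynomial, which splits over the algebraically closed field C *)
Definition spectrum n (A : 'M[C]_n) : seq C :=
  sval (closed_field_poly_normal (char_poly A)).

Definition xlnx (x : R) : R := if x == 0 then 0 else x * ln x.

(* von Neumann entropy H(s) = - Tr (s log s) = - sum_lambda lambda log lambda
   (for a density operator the eigenvalues are real, so we take real parts) *)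
Definition entropy n (s : 'M[C]_n) : R :=
  - \sum_(z <- spectrum s) xlnx (@complex.Re R z).

Definition depol (eta : R) (rho : 'M[C]_2) : 'M[C]_2 :=
  (1 - eta)%:C *: rho + (eta%:C * \tr rho / 2%:R) *: 1%:M.

Definition coh_info_state a b e (Psi : 'M[C]_a -> 'M[C]_e)
  (Phi : 'M[C]_a -> 'M[C]_b) (rho : 'M[C]_a) : R :=
  entropy (Psi rho) - entropy (Phi rho).

(* coherent information: maximum (here: supremum in the extended reals,
   which is attained) over density operators *)
Definition coh_info a b e (Psi : 'M[C]_a -> 'M[C]_e)
  (Phi : 'M[C]_a -> 'M[C]_b) : \bar R :=
  ereal_sup [set (coh_info_state Psi Phi rho)%:E | rho in [set rho | density rho]].

End QDefs.

(* Main.v *)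
Require Import Defs.
From HB Require Import structures.
From mathcomp Require Import all_boot all_order all_algebra.
From mathcomp Require Import classical_sets reals ereal exp.
From mathcomp.real_closed Require Import complex.
From mathcomp Require Import ring.
Import Order.TTheory GRing.Theory Num.Theory.
Local Open Scope ring_scope.
Set Implicit Arguments. Unset Strict Implicit. Unset Printing Implicit Defensive.

Lemma char_poly_mx_ublock (F : comNzRingType) n1 n2 (A : 'M[F]_n1) (Dm : 'M[F]_n2) :
  char_poly (block_mx A 0 0 Dm) = char_poly A * char_poly Dm.
Proof.
rewrite /char_poly /char_poly_mx scalar_mx_block map_block_mx !map_mx0.
by rewrite opp_block_mx add_block_mx !oppr0 !addr0 det_ublock.
Qed.

Lemma sylvester (F : comNzRingType) n m (B : 'M[F]_(n, m)) (Cm : 'M[F]_(m, n)) :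
  char_poly (B *m Cm) * 'X^m = char_poly (Cm *m B) * 'X^n.
Proof.
pose B' := map_mx polyC B; pose C' := map_mx polyC Cm.
pose N := block_mx ('X%:M : 'M_n) B' ('X *: C') ('X%:M : 'M_m).
pose L := block_mx (1%:M : 'M_n) 0 (- C') (1%:M : 'M_m).
have dL : \det L = 1 by rewrite det_lblock !det1 mulr1.
have e1 : L *m N = block_mx ('X%:M) B' 0 (char_poly_mx (Cm *m B)).
  rewrite mulmx_block !mul1mx !mul0mx !addr0 mulNmx mul_mx_scalar addNr.
  by rewrite /char_poly_mx map_mxM -/B' -/C' addrC mulNmx.
have e2 : N *m L = block_mx (char_poly_mx (B *m Cm)) B' 0 ('X%:M).
  rewrite mulmx_block !mulmx1 !mulmx0 !add0r mulmxN mul_scalar_mx scalerN subrr.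
  by rewrite /char_poly_mx map_mxM -/B' -/C'.
have := congr1 determinant e1; rewrite det_mulmx dL mul1r det_ublock det_scalar => h1.
have := congr1 determinant e2; rewrite det_mulmx dL mulr1 det_ublock det_scalar => h2.
by rewrite /char_poly mulrC -[RHS]mulrC -h1 h2 mulrC.
Qed.

Lemma Xn_prod (F : comNzRingType) k :
  'X^k = \prod_(z <- nseq k (0 : F)) ('X - z%:P).
Proof. by elim: k => [|k IH]; rewrite ?big_nil ?expr0 // exprS /= big_cons IH subr0. Qed.

Lemma entropy_char (R : realType) n (A : 'M[R[i]]_n) (s : seq R[i]) k j :
  char_poly A * 'X^k = \prod_(z <- s) ('X - z%:P) * 'X^j ->
  entropy A = - \sum_(z <- s) xlnx (complex.Re z).
Proof.
rewrite /entropy /spectrum; case: closed_field_poly_normal => sp /= Hsp.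
have lc : lead_coef (char_poly A) = 1 by apply/monicP/char_poly_monic.
rewrite Hsp lc scale1r !Xn_prod -!big_cat => H.
have P := prod_XsubC_eq H.
have z0 : forall k', \sum_(z <- nseq k' (0 : R[i])) xlnx (complex.Re z) = 0.
  move=> k'; rewrite big1_seq // => z /andP [_ /nseqP [-> _]].
  by rewrite /xlnx /= eqxx.
have E : \sum_(z <- sp ++ nseq k 0) xlnx (complex.Re z) = \sum_(z <- s ++ nseq j 0) xlnx (complex.Re z) by apply: perm_big.
by move: E; rewrite !big_cat /= !z0 !addr0 => ->.
Qed.

Definition flip (c : 'I_2) : 'I_2 := if c == ord0 then ord_max else ord0.

Lemma I2 (c : 'I_2) : c = ord0 \/ c = ord_max.
Proof. by case: c => [[|[|c]]] Hc; [left|right|]; rewrite //; apply/val_inj. Qed.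

Lemma sum2 (T : nmodType) (g : 'I_2 -> T) c : \sum_(j < 2) g j = g c + g (flip c).
Proof.
rewrite big_ord_recl big_ord1.
have -> : lift ord0 ord0 = ord_max :> 'I_2 by apply/val_inj.
by case: (I2 c) => -> //=; rewrite addrC.
Qed.

Lemma conjR (R : realType) (x : R) : Num.conj (x%:C)%C = (x%:C)%C.
Proof. by apply/eqP; rewrite eq_complex /= oppr0 !eqxx. Qed.

Lemma adjmx_entry (R : realType) m n (A : 'M[R[i]]_(m, n)) i j :
  adjmx A i j = Num.conj (A j i).
Proof. by rewrite !mxE. Qed.

Lemma depol_delta (R : realType) (eta : R) (a b i' i : 'I_2) :
  depol eta (delta_mx a b) i' i =
  (1 - eta)%:C%C * ((i' == a) && (i == b))%:R + eta%:C%C * (a == b)%:R / 2%:R * (i' == i)%:R.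
Proof.
rewrite /depol !mxE /mxtrace big_ord_recl big_ord1 !mxE.
have -> : lift ord0 ord0 = ord_max :> 'I_2 by apply/val_inj.
congr (_ + _).
by case: (I2 a) => ->; case: (I2 b) => -> /=; rewrite ?addr0 ?add0r mulr_natr.
Qed.

Lemma Gen (R : realType) (eta : R) e (V : 'M[R[i]]_(2 * e, 2)) :
  (forall rho : 'M[R[i]]_2, ptrace2 (V *m rho *m adjmx V) = depol eta rho) ->
  forall i j i' j' : 'I_2,
  \sum_(k < e) V (mxvec_index i' k) j' * Num.conj (V (mxvec_index i k) j)
  = depol eta (delta_mx j' j) i' i.
Proof.
move=> H i j i' j'.
have := congr1 (fun X : 'M[R[i]]_2 => X i' i) (H (delta_mx j' j)); rewrite /ptrace2 mxE => <-.
have -> : V *m delta_mx j' j *m adjmx V = col j' V *m row j (adjmx V).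
  by rewrite rowE colE !mulmxA -(mulmxA V (delta_mx j' 0)) mul_delta_mx.
by apply: eq_bigr => k _; rewrite mxE big_ord1 !mxE.
Qed.

Definition Mf (R : realType) e (V : 'M[R[i]]_(2 * e, 2)) (sv : 'I_2 -> R)
  (ja : 'I_2 -> 'I_2) : 'M[R[i]]_(e, 2) :=
  \matrix_(k, c) (V (mxvec_index c k) (ja c) * ((sv (ja c))%:C)%C).

Lemma adjMM (R : realType) (eta : R) e (V : 'M[R[i]]_(2 * e, 2)) sv ja jb :
  (forall rho : 'M[R[i]]_2, ptrace2 (V *m rho *m adjmx V) = depol eta rho) ->
  adjmx (Mf V sv ja) *m Mf V sv jb =
  \matrix_(c, c') (((sv (ja c) * sv (jb c'))%:C)%C * depol eta (delta_mx (jb c') (ja c)) c' c).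
Proof.
move=> H; apply/matrixP => c c'; rewrite [LHS]mxE [RHS]mxE -(Gen H) mulr_sumr.
apply: eq_bigr => k _; rewrite !mxE rmorphM /= conjR !rmorphM /=.
ring.
Qed.

Definition rhoD (R : realType) (sv : 'I_2 -> R) : 'M[R[i]]_2 :=
  diag_mx (\row_j (((sv j * sv j)%:C)%C)).

Lemma adjmx_row (R : realType) m n1 n2 (A : 'M[R[i]]_(m, n1)) (B : 'M[R[i]]_(m, n2)) :
  adjmx (row_mx A B) = col_mx (adjmx A) (adjmx B).
Proof. by rewrite /adjmx map_row_mx tr_row_mx. Qed.

Lemma psi_eq (R : realType) e (V : 'M[R[i]]_(2 * e, 2)) sv :
  ptrace1 (V *m rhoD sv *m adjmx V) =
  row_mx (Mf V sv id) (Mf V sv flip) *m adjmx (row_mx (Mf V sv id) (Mf V sv flip)).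
Proof.
rewrite adjmx_row mul_row_col /rhoD mul_mx_diag; apply/matrixP => k l.
rewrite [LHS]mxE [RHS]mxE [X in _ = X + _]mxE [X in _ = _ + X]mxE -big_split.
apply: eq_bigr => i _; rewrite mxE (sum2 _ i); congr (_ + _); rewrite !mxE /=;
  by rewrite rmorphM /= [X in _ = _ * X]rmorphM /= conjR; ring.
Qed.

Lemma det2 (F : comNzRingType) (A : 'M[F]_2) :
  \det A = A ord0 ord0 * A ord_max ord_max - A ord0 ord_max * A ord_max ord0.
Proof.
rewrite (expand_det_row _ ord0) big_ord_recl big_ord1 /cofactor !det_mx11 !mxE /=.
have -> : lift ord0 (0 : 'I_1) = ord_max :> 'I_2 by apply/val_inj.
have -> : lift (ord_max : 'I_2) (0 : 'I_1) = ord0 :> 'I_2 by apply/val_inj.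
rewrite /= expr0 expr1 mul1r; ring.
Qed.

Lemma char_poly2 (F : comNzRingType) (A : 'M[F]_2) l1 l2 :
  l1 + l2 = A ord0 ord0 + A ord_max ord_max ->
  l1 * l2 = A ord0 ord0 * A ord_max ord_max - A ord0 ord_max * A ord_max ord0 ->
  char_poly A = ('X - l1%:P) * ('X - l2%:P).
Proof.
move=> h1 h2.
have -> : ('X - l1%:P) * ('X - l2%:P) = 'X^2 - (l1 + l2)%:P * 'X + (l1 * l2)%:P.
  by rewrite polyCD polyCM; ring.
rewrite h1 h2 /char_poly det2 /char_poly_mx !mxE /=.
rewrite polyCD polyCB !polyCM; ring.
Qed.

Lemma charG (R : realType) (eta : R) e (V : 'M[R[i]]_(2 * e, 2)) (sv : 'I_2 -> R) (l1 l2 : R) :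
  (forall rho : 'M[R[i]]_2, ptrace2 (V *m rho *m adjmx V) = depol eta rho) ->
  l1 + l2 = (sv ord0 * sv ord0 + sv ord_max * sv ord_max) * (1 - eta / 2%:R) ->
  l1 * l2 = (sv ord0 * sv ord0) * (sv ord_max * sv ord_max) * ((1 - eta / 2%:R)^+2 - (1 - eta)^+2) ->
  let Mt := row_mx (Mf V sv id) (Mf V sv flip) in
  char_poly (adjmx Mt *m Mt) =
  \prod_(z <- [:: l1; l2; sv ord_max * sv ord_max * eta / 2%:R; sv ord0 * sv ord0 * eta / 2%:R])
     ('X - ((z%:C)%C)%:P).
Proof.
move=> H h1 h2 Mt; rewrite /Mt adjmx_row mul_col_row !(adjMM _ _ _ H).
set Z1 := (X in block_mx _ X _ _); set Z2 := (X in block_mx _ _ X _).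
have -> : Z1 = 0.
  apply/matrixP => c c'; rewrite [LHS]mxE depol_delta /flip [RHS]mxE.
  by case: (I2 c) => ->; case: (I2 c') => -> /=; rewrite !(mulr0, mul0r, addr0, add0r).
have -> : Z2 = 0.
  apply/matrixP => c c'; rewrite [LHS]mxE depol_delta /flip [RHS]mxE.
  by case: (I2 c) => ->; case: (I2 c') => -> /=; rewrite !(mulr0, mul0r, addr0, add0r).
set Bb := (X in block_mx X _ _ _); set Dg := (X in block_mx _ _ _ X).
rewrite char_poly_mx_ublock (char_poly_trig (A := Dg)); last first.
  apply/is_trig_mxP => c c' lt; rewrite mxE depol_delta /flip.
  by case: (I2 c) lt => ->; case: (I2 c') => -> //=; rewrite !(mulr0, mul0r, addr0, add0r).
rewrite (char_poly2 (l1 := (l1%:C)%C) (l2 := (l2%:C)%C)); first last.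
- have bE : forall c c', Bb c c' = ((sv c * sv c')%:C)%C * depol eta (delta_mx c' c) c' c.
    by move=> c c'; rewrite /Bb [LHS]mxE.
  have h2C := congr1 (fun x => (x%:C)%C) h2; move: h2C => /=.
  rewrite !bE !depol_delta /=.
  rewrite !(rmorphM, rmorphD, rmorphB, rmorphN, rmorph1, fmorphV, rmorph_nat, rmorphXn) /= => ->.
  by field.
- have bE : forall c c', Bb c c' = ((sv c * sv c')%:C)%C * depol eta (delta_mx c' c) c' c.
    by move=> c c'; rewrite /Bb [LHS]mxE.
  have h1C := congr1 (fun x => (x%:C)%C) h1; move: h1C => /=.
  rewrite !bE !depol_delta /=.
  rewrite !(rmorphM, rmorphD, rmorphB, rmorphN, rmorph1, fmorphV, rmorph_nat) /= => ->.
  by field.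
rewrite !big_cons big_nil mulr1 big_ord_recl big_ord1 !mulrA.
have -> : lift ord0 ord0 = ord_max :> 'I_2 by apply/val_inj.
have dE : forall c c', Dg c c' = ((sv (flip c) * sv (flip c'))%:C)%C * depol eta (delta_mx (flip c') (flip c)) c' c.
  by move=> c c'; rewrite /Dg [LHS]mxE.
have -> : Dg ord0 ord0 = ((sv ord_max * sv ord_max * eta / 2%:R)%:C)%C.
  rewrite dE depol_delta /flip /=.
  by rewrite !(rmorphM, rmorphD, rmorphB, rmorphN, rmorph1, fmorphV, rmorph_nat) /=; ring.
have -> : Dg ord_max ord_max = ((sv ord0 * sv ord0 * eta / 2%:R)%:C)%C.
  rewrite dE depol_delta /flip /=.
  by rewrite !(rmorphM, rmorphD, rmorphB, rmorphN, rmorph1, fmorphV, rmorph_nat) /=; ring.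
by [].
Qed.

Lemma entPsi (R : realType) (eta : R) e (V : 'M[R[i]]_(2 * e, 2)) (sv : 'I_2 -> R) (l1 l2 : R) :
  (forall rho : 'M[R[i]]_2, ptrace2 (V *m rho *m adjmx V) = depol eta rho) ->
  l1 + l2 = (sv ord0 * sv ord0 + sv ord_max * sv ord_max) * (1 - eta / 2%:R) ->
  l1 * l2 = (sv ord0 * sv ord0) * (sv ord_max * sv ord_max) * ((1 - eta / 2%:R)^+2 - (1 - eta)^+2) ->
  entropy (ptrace1 (V *m rhoD sv *m adjmx V)) =
  - (xlnx l1 + xlnx l2 + xlnx (sv ord_max * sv ord_max * eta / 2%:R)
     + xlnx (sv ord0 * sv ord0 * eta / 2%:R)).
Proof.
move=> H h1 h2; rewrite psi_eq.
rewrite (entropy_char (k := 2 + 2) (j := e) (s := map (fun z => (z%:C)%C)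
  [:: l1; l2; sv ord_max * sv ord_max * eta / 2%:R; sv ord0 * sv ord0 * eta / 2%:R])).
  by rewrite /= !big_cons big_nil addr0 /= !addrA.
by rewrite sylvester (charG H h1 h2) big_map.
Qed.

Lemma entPhi (R : realType) (eta : R) (sv : 'I_2 -> R) :
  sv ord0 * sv ord0 + sv ord_max * sv ord_max = 1 ->
  entropy (depol eta (rhoD sv)) =
  - (xlnx ((1 - eta) * (sv ord0 * sv ord0) + eta / 2%:R)
     + xlnx ((1 - eta) * (sv ord_max * sv ord_max) + eta / 2%:R)).
Proof.
move=> hs.
have tr : \tr (rhoD sv) = 1.
  rewrite /rhoD mxtrace_diag big_ord_recl big_ord1 !mxE.
  have -> : lift ord0 ord0 = ord_max :> 'I_2 by apply/val_inj.
  by rewrite -rmorphD /= hs.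
have dE : forall c c', depol eta (rhoD sv) c c' =
    (1 - eta)%:C%C * rhoD sv c c' + (eta%:C%C * 1 / 2%:R) * (c == c')%:R.
  by move=> c c'; rewrite /depol tr !mxE.
rewrite (entropy_char (k := 0) (j := 0) (s := map (fun z => (z%:C)%C)
  [:: (1 - eta) * (sv ord0 * sv ord0) + eta / 2%:R;
      (1 - eta) * (sv ord_max * sv ord_max) + eta / 2%:R])).
  by rewrite /= !big_cons big_nil addr0 /=.
rewrite !expr0 !mulr1 char_poly_trig; last first.
  apply/is_trig_mxP => c c' lt; rewrite dE /rhoD !mxE.
  by case: (I2 c) lt => ->; case: (I2 c') => -> //=; rewrite !(mulr0, mul0r, addr0, add0r).
rewrite big_ord_recl big_ord1 big_map !big_cons big_nil mulr1.
have -> : lift ord0 ord0 = ord_max :> 'I_2 by apply/val_inj.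
rewrite !dE /rhoD !mxE /=.
by rewrite !(rmorphM, rmorphD, rmorphB, rmorphN, rmorph1, fmorphV, rmorph_nat) /= !mulr1.
Qed.

From mathcomp Require Import lra.

Lemma xlnx_pos (R : realType) (x : R) : 0 < x -> xlnx x = x * ln x.
Proof. by move=> hx; rewrite /xlnx gt_eqF. Qed.

Lemma ln_le_sub1 (R : realType) (x : R) : 0 < x -> ln x <= x - 1.
Proof.
move=> hx; have := @le_ln1Dx R (x - 1); rewrite addrCA subrr addr0; apply; lra.
Qed.

Lemma xlnx_tan (R : realType) (x y : R) : 0 < x -> 0 <= y ->
  xlnx x + (ln x + 1) * (y - x) <= xlnx y.
Proof.
move=> hx; rewrite le0r => /orP [/eqP -> | hy].
  by rewrite /xlnx (gt_eqF hx) eqxx; lra.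
rewrite !xlnx_pos //.
have h := ln_le_sub1 (divr_gt0 hx hy); rewrite ln_div ?posrE // in h.
have : y * (ln x - ln y) <= y * (x / y - 1) by rewrite ler_pM2l.
have e : y * (x / y - 1) = x - y by rewrite mulrBr mulr1 mulrCA divff ?gt_eqF // mulr1.
rewrite e.
nra.
Qed.

Lemma xlnx_superadd (R : realType) (x y : R) : 0 <= x -> 0 <= y ->
  xlnx x + xlnx y <= xlnx (x + y).
Proof.
rewrite le0r => /orP [/eqP -> | hx]; first by rewrite add0r {1}/xlnx eqxx add0r.
rewrite le0r => /orP [/eqP -> | hy]; first by rewrite addr0 {2}/xlnx eqxx addr0.
rewrite !xlnx_pos ?addr_gt0 //.
have h1 : ln x <= ln (x + y) by rewrite ler_ln ?posrE; lra.
have h2 : ln y <= ln (x + y) by rewrite ler_ln ?posrE; lra.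
nra.
Qed.

Lemma key (R : realType) (eta : R) : 0 < eta -> eta <= 1 ->
  exists a b l1 l2 : R, [/\ 0 < a, 0 < b, a + b = 1,
   l1 + l2 = (a + b) * (1 - eta / 2%:R) /\
   l1 * l2 = a * b * ((1 - eta / 2%:R)^+2 - (1 - eta)^+2) &
   0 < - (xlnx l1 + xlnx l2 + xlnx (b * eta / 2%:R) + xlnx (a * eta / 2%:R))
       - - (xlnx ((1 - eta) * a + eta / 2%:R) + xlnx ((1 - eta) * b + eta / 2%:R))].
Proof.
move=> he1 he2.
pose h := eta / 2%:R; pose T := 1 - h.
have hh : 0 < h by rewrite divr_gt0.
have eh : eta = 2%:R * h by rewrite /h mulrC divfK ?pnatr_eq0.
have hT : 0 < T by rewrite /T; lra.
pose c := (1 - eta) / h * (ln T - ln h).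
pose K := sequences.expR c.
have hK : 0 < K by apply: expR_gt0.
pose b := (1 + K)^-1; pose a := K * b.
have hb : 0 < b by rewrite invr_gt0; lra.
have ha : 0 < a by rewrite mulr_gt0.
have hab : a + b = 1 by rewrite /a /b -{2}(mul1r (1 + K)^-1) -mulrDl addrC divff //; lra.
have lna : ln a = c + ln b by rewrite /a lnM ?posrE // expRK.
pose D := T ^+ 2 - 4%:R * a * b * (T ^+ 2 - (1 - eta) ^+ 2).
have h4 : 4%:R * a * b <= 1 by have := sqr_ge0 (a - b); nra.
have h5 : 0 <= T ^+ 2 - (1 - eta) ^+ 2 by rewrite /T; nra.
have h6 : 0 <= 4%:R * a * b by nra.
have hD : (1 - eta) ^+ 2 <= D.
  rewrite /D; nra.
have hD0 : 0 <= D by apply: le_trans hD; nra.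
pose sq := Num.sqrt D.
have sq2 : sq ^+ 2 = D by rewrite sqr_sqrtr.
have sq0 : 0 <= sq by apply: sqrtr_ge0.
have sqT : sq <= T.
  have : D <= T ^+ 2 by rewrite /D; have := mulr_ge0 h6 h5; lra.
  nra.
exists a, b, ((T + sq) / 2%:R), ((T - sq) / 2%:R); split => //; first split.
- by rewrite hab mul1r /T /h; field.
- rewrite -/h -/T; apply: (@mulfI _ 4%:R); first by rewrite pnatr_eq0.
  have -> : 4%:R * ((T + sq) / 2%:R * ((T - sq) / 2%:R)) = T ^+ 2 - sq ^+ 2 by field.
  by rewrite sq2 /D; ring.
set l1 := (T + sq) / 2%:R; set l2 := (T - sq) / 2%:R.
have hl1 : 0 <= l1 by rewrite /l1; lra.
have hl2 : 0 <= l2 by rewrite /l2; lra.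
have S := xlnx_superadd hl1 hl2.
have el : l1 + l2 = T by rewrite /l1 /l2; field.
rewrite el in S.
rewrite -!mulrA -/h.
set p0 := (1 - eta) * a + h; set p1 := (1 - eta) * b + h.
have hp0 : 0 <= p0 by rewrite /p0; nra.
have hp1 : 0 <= p1 by rewrite /p1; nra.
have T1 := xlnx_tan hT hp0.
have T2 := xlnx_tan hh hp1.
have T3 := xlnx_tan (mulr_gt0 ha hh) (ltW hh).
have Xb : xlnx (b * h) = b * h * (ln b + ln h) by rewrite xlnx_pos ?mulr_gt0 // lnM.
have lnah : ln (a * h) = c + ln b + ln h by rewrite lnM ?posrE // lna.
rewrite lnah in T3.
have E : (ln T + 1) * (p0 - T) + (ln h + 1) * (p1 - h) + (c + ln b + ln h + 1) * (h - a * h)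
   - b * h * (ln b + ln h) = b * h.
  have ea : a = 1 - b by lra.
  rewrite /p0 /p1 /T /c ea eh; field.
  by rewrite gt_eqF.
have hbh : 0 < b * h by rewrite mulr_gt0.
have -> : K * (b * h) = a * h by rewrite /a mulrA.
lra.
Qed.

Lemma density_rhoD (R : realType) (sv : 'I_2 -> R) :
  sv ord0 * sv ord0 + sv ord_max * sv ord_max = 1 -> density (rhoD sv).
Proof.
move=> hs; split.
- apply/matrixP => c c'; rewrite !mxE.
  case: (eqVneq c c') => [->|ne]; first by rewrite ?eqxx ?mulr1n conjR.
  by rewrite !mulr0n rmorph0.
- move=> x; rewrite /rhoD mul_mx_diag mxE; apply: sumr_ge0 => j _.
  rewrite !mxE -mulrA mulrC -mulrA; apply: mulr_ge0.
    by rewrite ler0c; nra.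
  exact: mul_conjC_ge0.
- rewrite /rhoD mxtrace_diag big_ord_recl big_ord1 !mxE.
  have -> : lift ord0 ord0 = ord_max :> 'I_2 by apply/val_inj.
  by rewrite -rmorphD /= hs.
Qed.

Theorem theorem1 (R : realType) (eta : R) (e : nat)
  (V : 'M[R[i]]_(2 * e, 2)) :
  0 < eta -> eta <= 1 ->
  is_isometry V ->
  (forall rho : 'M[R[i]]_2, ptrace2 (V *m rho *m adjmx V) = depol eta rho) ->
  (0 < coh_info (fun rho => ptrace1 (V *m rho *m adjmx V)) (depol eta))%E.
Proof.
move=> he1 he2 _ H.
have [a [b [l1 [l2 [ha hb hab [h1 h2] hpos]]]]] := key he1 he2.
pose sv := fun c : 'I_2 => if c == ord0 then Num.sqrt a else Num.sqrt b.
have sv0 : sv ord0 * sv ord0 = a by rewrite /sv eqxx -expr2 sqr_sqrtr // ltW.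
have sv1 : sv ord_max * sv ord_max = b by rewrite /sv /= -expr2 sqr_sqrtr // ltW.
have hs : sv ord0 * sv ord0 + sv ord_max * sv ord_max = 1 by rewrite sv0 sv1.
apply: (@lt_le_trans _ _ ((coh_info_state (fun rho => ptrace1 (V *m rho *m adjmx V))
   (depol eta) (rhoD sv))%:E)).
  rewrite lte_fin /coh_info_state (entPhi eta hs) (entPsi (l1 := l1) (l2 := l2) H).
  - by rewrite sv0 sv1.
  - by rewrite sv0 sv1.
  - by rewrite sv0 sv1.
apply: ereal_sup_ubound; exists (rhoD sv) => //.
exact: density_rhoD.
Qed.
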